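(* Let $R$ be a von Neumann regular semiartinian ring with primitive factors artinian, of Loewy length $\sigma+1$, with dimension sequence $\{(\lambda_\alpha,\{(n_{\alpha\beta},K_{\alpha\beta})\mid\beta<\lambda_\alpha\})\mid\alpha\le\sigma\}$. Then the following are equivalent: (i) $R$ is commutative; (ii) for all $\alpha\le\sigma$ and $\beta<\lambda_\alpha$, $K_{\alpha\beta}$ is commutative and $n_{\alpha\beta}=1$; (iii) for each $\beta<\lambda_0$, $K_{0\beta}$ is commutative and $n_{0\beta}=1$.
   Context: Socle sequence of $R$: $S_0=0$, $S_{\alpha+1}/S_\alpha=\mathrm{Soc}(R/S_\alpha)$, unions at limits; semiartinian of Loewy length $\sigma+1$ means $S_{\sigma+1}=R$. Primitive factors artinian: $R/P$ artinian for each primitive ideal $P$. For such rings, for each $\alpha\le\sigma$ the layer $S_{\alpha+1}/S_\alpha$ is isomorphic as a ring without unit to $\bigoplus_{\beta<\lambda_\alpha}M_{n_{\alpha\beta}}(K_{\alpha\beta})$, where $\lambda_\alpha>0$ is the number of homogeneous components of the layer, $n_{\alpha\beta}$ positive integers and $K_{\alpha\beta}$ skew-fields (with $K_{\alpha\beta}$ the endomorphism ring of the simple module whose isotypic component is the $\beta$-th homogeneous component); these data form the dimension sequence of $R$. *)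

(* Defs.v *)
(* Right modules over an abstract (possibly infinite) ring R
   are represented concretely via right ideals of R: every module occurring
   in the socle sequence is a subquotient J/I of R_R. *)
From mathcomp Require Import all_boot all_algebra.
Set Implicit Arguments. Unset Strict Implicit. Unset Printing Implicit Defensive.
Import GRing.Theory.
Local Open Scope ring_scope.

Section RingDefs.
Variable R : nzRingType.

Definition subsetR (A B : R -> Prop) := forall x, A x -> B x.

Definition right_ideal (J : R -> Prop) : Prop :=
  [/\ J 0, (forall x y, J x -> J y -> J (x - y)) & (forall x r, J x -> J (x * r))].

Definition ideal (I : R -> Prop) : Prop :=
  right_ideal I /\ (forall x r, I x -> I (r * x)).

Definition commutative_ring : Prop := forall a b : R, a * b = b * a.

Definition von_neumann_regular : Prop := forall a : R, exists x, a * x * a = a.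

Definition maximal_right_ideal (M : R -> Prop) : Prop :=
  [/\ right_ideal M, ~ M 1 &
      forall N, right_ideal N -> subsetR M N -> N 1 \/ subsetR N M].

(* right primitive ideal: the annihilator of a simple right module R/M,
   M a maximal right ideal; ann(R/M) = {r | forall s, s r \in M}. *)
Definition primitive_ideal (P : R -> Prop) : Prop :=
  exists M, maximal_right_ideal M /\ forall r, P r <-> (forall s, M (s * r)).

(* R/P is (right) artinian: DCC on right ideals of R/P, i.e. on right ideals
   of R containing P. *)
Definition artinian_factor (P : R -> Prop) : Prop :=
  forall J : nat -> (R -> Prop),
    (forall n, right_ideal (J n) /\ subsetR P (J n) /\ subsetR (J n.+1) (J n)) ->
    exists m, forall n, (m <= n)%N -> subsetR (J m) (J n).

Definition primitive_factors_artinian : Prop :=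
  forall P, primitive_ideal P -> artinian_factor P.

(* J/I is a minimal right ideal of R/I, i.e. a simple submodule of (R/I)_R *)
Definition minimal_over (I J : R -> Prop) : Prop :=
  [/\ right_ideal J, subsetR I J, (exists x, J x /\ ~ I x) &
      forall J', right_ideal J' -> subsetR I J' -> subsetR J' J ->
                 subsetR J' I \/ subsetR J J'].

(* preimage in R of Soc(R/I): I + sum of all minimal right ideals over I *)
Definition soc_over (I : R -> Prop) : R -> Prop :=
  fun x => exists s : seq R,
    (forall y, y \in s -> exists J, minimal_over I J /\ J y) /\
    I (x - \sum_(y <- s) y).

(* The socle sequence S_alpha as a set of ideals: S_0 = 0, successor step
   S_{alpha+1} = soc_over S_alpha, unions at limits (the union of any
   nonempty set of terms of the chain is again a term). *)
Inductive socle_stage : (R -> Prop) -> Prop :=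
  | socle_zero : socle_stage (fun x => x = 0)
  | socle_succ I : socle_stage I -> socle_stage (soc_over I)
  | socle_union (F : (R -> Prop) -> Prop) :
      (exists I, F I) -> (forall I, F I -> socle_stage I) ->
      socle_stage (fun x => exists I, F I /\ I x).

Definition semiartinian : Prop :=
  exists S, socle_stage S /\ forall x, S x.

(* R-endomorphisms of the module J/I, represented by lifts f : R -> R
   (only the values on J matter, modulo I). *)
Definition endo (I J : R -> Prop) (f : R -> R) : Prop :=
  [/\ (forall x, J x -> J (f x)),
      (forall x y, J x -> J y -> I (f (x + y) - (f x + f y))),
      (forall x r, J x -> I (f (x * r) - f x * r)) &
      (forall x, I x -> I (f x))].

Definition End_commutative (I J : R -> Prop) : Prop :=
  forall f g, endo I J f -> endo I J g ->
    forall x, J x -> I (f (g x) - g (f x)).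

(* J/I has dimension n as a left vector space over K = End_R(J/I):
   it has a K-basis of n elements. *)
Definition End_dim (I J : R -> Prop) (n : nat) : Prop :=
  exists xs : 'I_n -> R,
    [/\ (forall i, J (xs i)),
        (forall y, J y -> exists fs : 'I_n -> R -> R,
            (forall i, endo I J (fs i)) /\ I (y - \sum_i fs i (xs i))) &
        (forall fs : 'I_n -> R -> R, (forall i, endo I J (fs i)) ->
            I (\sum_i fs i (xs i)) -> forall i, I (fs i (xs i)))].

End RingDefs.

(* Main.v *)
Require Import Defs.
From mathcomp Require Import all_boot all_algebra.
From Stdlib Require Import Classical.
Set Implicit Arguments. Unset Strict Implicit. Unset Printing Implicit Defensive.
Import GRing.Theory.
Local Open Scope ring_scope.

Lemma swapB (V : zmodType) (a b c d : V) : a - b - (c - d) = a - c - (b - d).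
Proof. rewrite !opprB !addrA -!addrA; congr (_ + _); rewrite addrC addrA; congr (_ + _); exact: addrC. Qed.

Section Helpers.
Variable R : nzRingType.
Implicit Types I J A B : R -> Prop.

Lemma riN J : right_ideal J -> forall x, J x -> J (- x).
Proof. by case=> J0 JB _ x Jx; rewrite -sub0r; apply: JB. Qed.

Lemma riD J : right_ideal J -> forall x y, J x -> J y -> J (x + y).
Proof.
move=> rJ x y Jx Jy; rewrite -(opprK y); case: (rJ) => _ JB _.
by apply: JB => //; apply: riN.
Qed.

Lemma riM J : right_ideal J -> forall x r, J x -> J (x * r).
Proof. by case. Qed.

Lemma ri0 J : right_ideal J -> J 0.
Proof. by case. Qed.

Lemma riB J : right_ideal J -> forall x y, J x -> J y -> J (x - y).
Proof. by case. Qed.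

Lemma soc_incl I : subsetR I (soc_over I).
Proof. by move=> x Ix; exists [::]; split=> [y|]; rewrite ?in_nil // big_nil subr0. Qed.

Lemma stage0 I : socle_stage I -> I 0.
Proof.
elim=> [|I1 _ IH1|F [I2 FI] _ IH] //.
- exact: soc_incl IH1.
- by exists I2; split=> //; apply: IH.
Qed.


Lemma min_ext I I' J : subsetR I I' -> subsetR I' I -> minimal_over I J -> minimal_over I' J.
Proof.
move=> H1 H2 [rJ IJ [x [Jx nIx]] minJ]; split=> //.
- by move=> y /H2 /IJ.
- by exists x; split=> // /H2.
- move=> J' rJ' IJ' J'J; case: (minJ J' rJ' (fun y Hy => IJ' y (H1 y Hy)) J'J).
  + by move=> H; left=> y /H /H1.
  + by right.
Qed.

Lemma soc_ext I I' : subsetR I I' -> subsetR I' I -> subsetR (soc_over I) (soc_over I').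
Proof.
move=> H1 H2 x [s [Hs Hx]]; exists s; split; last by apply: H1.
by move=> y /Hs [J [mJ Jy]]; exists J; split=> //; apply: min_ext mJ.
Qed.

Definition psub A B := subsetR A B /\ ~ subsetR B A.
Definition extreme c := forall x, socle_stage x -> psub x c -> subsetR (soc_over x) c.

Lemma lemA c : socle_stage c -> extreme c ->
  forall x, socle_stage x -> subsetR x c \/ subsetR (soc_over c) x.
Proof.
move=> Hc Ec x; elim: x /.
- by left=> y ->; apply: stage0.
- move=> x Hx [xc|cx].
  + case: (classic (subsetR c x)) => cx.
    * by right; apply: soc_ext.
    * by left; apply: Ec.
  + by right=> y /cx; apply: soc_incl.
- move=> F ne HF IH.
  case: (classic (forall I, F I -> subsetR I c)) => H.
  + by left=> y [I [FI Iy]]; apply: (H I).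
  + have [I HI] := not_all_ex_not _ _ H.
    have [FI nIc] := imply_to_and _ _ HI.
    case: (IH I FI) => // cI; right=> y /cI Iy; by exists I.
Qed.

Lemma lemB c : socle_stage c -> extreme c.
Proof.
elim.
- move=> x Hx [_ nx]; exfalso; apply: nx => y ->; exact: stage0.
- move=> c' Hc' IHc x Hx [xc ncx].
  case: (lemA Hc' IHc Hx) => [xc'|cx]; last by exfalso; apply: ncx.
  case: (classic (subsetR c' x)) => c'x.
  + by apply: soc_ext.
  + by move=> y /(IHc x Hx (conj xc' c'x)); apply: soc_incl.
- move=> F ne HF IH x Hx [xU nUx].
  case: (classic (forall I, F I -> subsetR I x)) => H.
  + by exfalso; apply: nUx => y [I [FI Iy]]; apply: (H I).
  have [I HI] := not_all_ex_not _ _ H.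
  have [FI nIx] := imply_to_and _ _ HI.
  case: (lemA (HF I FI) (IH I FI) Hx) => [xI|Ix].
  + by move=> y /(IH I FI x Hx (conj xI nIx)) Iy; exists I.
  + by exfalso; apply: nIx => y /soc_incl /Ix.
Qed.

Lemma chain A B : socle_stage A -> socle_stage B -> subsetR A B \/ subsetR B A.
Proof.
move=> HA HB; case: (lemA HB (lemB HB) HA) => [|H]; first by left.
by right=> y /soc_incl /H.
Qed.

Lemma ri_soc I : right_ideal I -> right_ideal (soc_over I).
Proof.
move=> rI; split.
- by apply: soc_incl; apply: ri0.
- move=> x y [s1 [H1 Hx]] [s2 [H2 Hy]].
  exists (s1 ++ map (fun z => - z) s2); split.
  + move=> z; rewrite mem_cat => /orP [/H1 //|/mapP [w /H2 [J [mJ Jw]] ->]].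
    exists J; split=> //; apply: riN => //; by case: mJ.
  + rewrite big_cat big_map sumrN /=.
    by rewrite swapB; apply: riB.
- move=> x r [s [Hs Hx]]; exists (map (fun z => z * r) s); split.
  + move=> z /mapP [w /Hs [J [mJ Jw]] ->]; exists J; split=> //.
    by apply: riM => //; case: mJ.
  + by rewrite big_map -mulr_suml -mulrBl; apply: riM.
Qed.

Lemma stage_ri I : socle_stage I -> right_ideal I.
Proof.
move=> HI; elim: HI.
- split=> //; [by move=> x y -> ->; rewrite subr0 | by move=> x r ->; rewrite mul0r].
- by move=> I' _; apply: ri_soc.
- move=> F [I0 FI0] HF IH; split.
  + by exists I0; split=> //; apply: ri0; apply: IH.
  + move=> x y [I1 [F1 Ix]] [I2 [F2 Iy]].
    case: (chain (HF _ F1) (HF _ F2)) => H.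
    * by exists I2; split=> //; apply: riB; [exact: IH | exact: H|].
    * by exists I1; split=> //; apply: riB; [exact: IH | | exact: H].
  + move=> x r [I1 [F1 Ix]]; exists I1; split=> //; apply: riM => //; exact: IH.
Qed.


Fixpoint Lsum I (Js : seq (R -> Prop)) : R -> Prop :=
  match Js with
  | [::] => I
  | J :: Js' => fun z => exists j, J j /\ Lsum I Js' (z - j)
  end.

Fixpoint allm I (Js : seq (R -> Prop)) : Prop :=
  match Js with
  | [::] => True
  | J :: Js' => minimal_over I J /\ allm I Js'
  end.

Lemma Lsum_ri I Js : right_ideal I -> allm I Js -> right_ideal (Lsum I Js).
Proof.
move=> rI; elim: Js => [//|J Js IH] /= [[rJ _ _ _] /IH rL]; split.
- by exists 0; split; [apply: ri0 | rewrite subr0; apply: ri0].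
- move=> x y [jx [Jx Lx]] [jy [Jy Ly]]; exists (jx - jy); split; first exact: riB.
  by rewrite swapB; apply: riB.
- move=> x r [j [Jj Lj]]; exists (j * r); split; first exact: riM.
  by rewrite -mulrBl; apply: riM.
Qed.

Lemma Lsum_I I Js : allm I Js -> subsetR I (Lsum I Js).
Proof.
elim: Js => [|J Js IH] /=; first by move=> _ x.
move=> [[rJ _ _ _] /IH HL] x Ix.
by exists 0; split; [apply: ri0 | rewrite subr0; apply: HL].
Qed.

Lemma soc_Lsum I x : soc_over I x -> exists Js, allm I Js /\ Lsum I Js x.
Proof.
case=> s []; elim: s x => [|y s IH] x Hs Hx.
- by exists [::]; split=> //=; move: Hx; rewrite big_nil subr0.
- have [J [mJ Jy]] := Hs y (mem_head _ _).
  have [Js [aJs LJs]] : exists Js, allm I Js /\ Lsum I Js (x - y).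
    apply: IH; first by move=> z zs; apply: Hs; rewrite inE zs orbT.
    by move: Hx; rewrite big_cons opprD addrA.
  by exists (J :: Js); split=> //; exists y.
Qed.

Definition Qprop I := forall x, I x -> x <> 0 ->
  exists J0, minimal_over (fun z : R => z = 0) J0 /\ subsetR J0 (fun y => exists r, y = x * r).

Lemma lemG I : Qprop I -> right_ideal I -> forall Js, allm I Js ->
  forall A, right_ideal A -> subsetR A (Lsum I Js) -> (exists z, A z /\ z <> 0) ->
  exists J0, minimal_over (fun z : R => z = 0) J0 /\ subsetR J0 A.
Proof.
move=> QI rI; elim=> [|J Js IH] /=.
- move=> _ A rA AI [z [Az nz]]; have [J0 [mJ0 J0z]] := QI z (AI z Az) nz.
  by exists J0; split=> // y /J0z [r ->]; apply: riM.
- move=> [mJ aJs] A rA AL nzA.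
  have rL := Lsum_ri rI aJs.
  case: (classic (exists z, (A z /\ Lsum I Js z) /\ z <> 0)) => [[z [[Az Lz] nz]]|H].
  + have rAL : right_ideal (fun z => A z /\ Lsum I Js z).
      split; first by split; apply: ri0.
      * by move=> x y [Ax Lx] [Ay Ly]; split; apply: riB.
      * by move=> x r [Ax Lx]; split; apply: riM.
    have [J0 [mJ0 H0]] := IH aJs _ rAL (fun y Hy => proj2 Hy) (ex_intro _ z (conj (conj Az Lz) nz)).
    by exists J0; split=> // y /H0 [].
  + exists A; split=> //; split=> //.
    * by move=> x ->; apply: ri0.
    move=> B rB _ BA.
    case: (classic (exists b, B b /\ b <> 0)) => [[b [Bb nb]]|HB]; last first.
      by left=> b Bb; apply: NNPP => nb; apply: HB; exists b.
    right.
    pose B' := fun z => exists b l, B b /\ Lsum I Js l /\ z = b + l.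
    have rB' : right_ideal B'.
      split.
      * by exists 0, 0; split; [apply: ri0 | split; [apply: ri0 | rewrite addr0]].
      * move=> x y [b1 [l1 [B1 [L1 ->]]]] [b2 [l2 [B2 [L2 ->]]]].
        exists (b1 - b2), (l1 - l2); split; first exact: riB.
        split; first exact: riB.
        by rewrite opprD addrACA.
      * move=> x r [b1 [l1 [B1 [L1 ->]]]]; exists (b1 * r), (l1 * r).
        by split; [apply: riM | split; [apply: riM | rewrite mulrDl]].
    case: (mJ) => rJ IJ _ minJ.
    have rJ' : right_ideal (fun z => B' z /\ J z).
      split; first by split; [apply: ri0 | apply: ri0].
      * by move=> x y [Bx Jx] [By Jy]; split; apply: riB.
      * by move=> x r [Bx Jx]; split; apply: riM.
    have IJ' : subsetR I (fun z => B' z /\ J z).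
      move=> x Ix; split; last exact: IJ.
      exists 0, x; split; first exact: ri0.
      by split; [apply: Lsum_I | rewrite add0r].
    case: (minJ _ rJ' IJ' (fun y Hy => proj2 Hy)) => [J'I|JJ'].
    * exfalso; have [j [Jj Lbj]] := AL b (BA b Bb).
      have B'j : B' j.
        exists b, (j - b); split=> //; split; last by rewrite addrC subrK.
        by rewrite -opprB; apply: riN.
      have Ij := J'I j (conj B'j Jj).
      apply: H; exists b; split=> //; split; first exact: BA.
      by rewrite -(subrK j b); apply: riD => //; apply: Lsum_I.
    * move=> a Aa; have [j [Jj Laj]] := AL a Aa.
      have [[b' [l [Bb' [Ll ej]]]] _] := JJ' j Jj.
      have Aab : A (a - b') by apply: riB => //; apply: BA.
      have Lab : Lsum I Js (a - b').
        have -> : a - b' = (a - j) + l by rewrite ej opprD addrA subrK.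
        exact: riD.
      have -> : a = b'; last by [].
      apply: subr0_eq; apply: NNPP => nab; apply: H; exists (a - b'); split=> //.
Qed.

Lemma stageQ I : socle_stage I -> Qprop I.
Proof.
elim.
- by move=> x ->.
- move=> I' HI' IH x Hx nx.
  have rI := stage_ri HI'.
  have [Js [aJs Lx]] := soc_Lsum Hx.
  have rA : right_ideal (fun y => exists r, y = x * r).
    split; first by exists 0; rewrite mulr0.
    * by move=> _ _ [r1 ->] [r2 ->]; exists (r1 - r2); rewrite mulrBr.
    * by move=> _ r [r1 ->]; exists (r1 * r); rewrite mulrA.
  apply: (lemG IH rI aJs rA).
  + by move=> _ [r ->]; apply: riM => //; apply: Lsum_ri.
  + by exists x; split=> //; exists 1; rewrite mulr1.
- move=> F _ _ IH x [I' [FI Ix]] nx; exact: IH I' FI x Ix nx.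
Qed.

Lemma eqI_trans I u v w : right_ideal I -> I (u - v) -> I (v - w) -> I (u - w).
Proof.
move=> rI H1 H2; have -> : u - w = (u - v) + (v - w) by rewrite addrA subrK.
exact: riD.
Qed.

Lemma eqI_sym I u v : right_ideal I -> I (u - v) -> I (v - u).
Proof. by move=> rI H; rewrite -opprB; apply: riN. Qed.

Lemma eqI_addI I a b : right_ideal I -> I b -> I ((a + b) - a).
Proof. by move=> rI H; rewrite addrC addKr. Qed.

Lemma eqI_mul I u v c : right_ideal I -> I (u - v) -> I (u * c - v * c).
Proof. by move=> rI H; rewrite -mulrBl; apply: riM. Qed.

Lemma eqI_refl I u : right_ideal I -> I (u - u).
Proof. by move=> rI; rewrite subrr; apply: ri0. Qed.

Section Comm.
Hypothesis comm : forall a b : R, a * b = b * a.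

Lemma comm_gen I J : right_ideal I -> minimal_over I J -> forall x0, J x0 -> ~ I x0 ->
  forall y, J y -> exists a i, I i /\ y = x0 * a + i.
Proof.
move=> rI [rJ IJ _ minJ] x0 Jx0 nIx0.
pose J' := fun z => exists a i, I i /\ z = x0 * a + i.
have rJ' : right_ideal J'.
  split.
  - by exists 0, 0; split; [apply: ri0 | rewrite mulr0 addr0].
  - move=> _ _ [a1 [i1 [I1 ->]]] [a2 [i2 [I2 ->]]]; exists (a1 - a2), (i1 - i2).
    by split; [apply: riB | rewrite mulrBr opprD addrACA].
  - move=> _ r [a1 [i1 [I1 ->]]]; exists (a1 * r), (i1 * r).
    by split; [apply: riM | rewrite mulrDl mulrA].
have IJ' : subsetR I J' by move=> z Iz; exists 0, z; split=> //; rewrite mulr0 add0r.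
have J'J : subsetR J' J.
  by move=> _ [a [i [Ii ->]]]; apply: riD => //; [apply: riM | apply: IJ].
case: (minJ J' rJ' IJ' J'J) => [H|H //].
by exfalso; apply: nIx0; apply: H; exists 1, 0; split; [apply: ri0 | rewrite mulr1 addr0].
Qed.

Lemma comm_scal I J : right_ideal I -> minimal_over I J -> forall x0, J x0 -> ~ I x0 ->
  forall f, endo I J f -> exists a, forall y, J y -> I (f y - y * a).
Proof.
move=> rI mJ x0 Jx0 nIx0 f [fJ fadd flin fI].
have rJ : right_ideal J by case: mJ.
have IJ : subsetR I J by case: mJ.
have [a [i [Ii Hf]]] := comm_gen rI mJ Jx0 nIx0 (fJ x0 Jx0).
exists a => y Jy.
have [r [i' [Ii' ->]]] := comm_gen rI mJ Jx0 nIx0 Jy.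
have Jx0r : J (x0 * r) by apply: riM.
apply: (@eqI_trans _ _ (f (x0 * r) + f i') _ rI); first by apply: fadd => //; apply: IJ.
apply: (@eqI_trans _ _ (f (x0 * r)) _ rI); first by apply: eqI_addI => //; apply: fI.
apply: (@eqI_trans _ _ (f x0 * r) _ rI); first by apply: flin.
rewrite Hf mulrDl.
apply: (@eqI_trans _ _ (x0 * r * a) _ rI).
  rewrite -mulrA (comm a r) mulrA; apply: eqI_addI => //; exact: riM.
apply: eqI_sym => //; rewrite mulrDl; apply: eqI_addI => //; exact: riM.
Qed.

Lemma comm_ii I J : right_ideal I -> minimal_over I J -> End_commutative I J /\ End_dim I J 1.
Proof.
move=> rI mJ; have rJ : right_ideal J by case: mJ.
have [x0 [Jx0 nIx0]] : exists x, J x /\ ~ I x by case: mJ.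
split.
- move=> f g ef eg x Jx.
  have [a Ha] := comm_scal rI mJ Jx0 nIx0 ef.
  have [b Hb] := comm_scal rI mJ Jx0 nIx0 eg.
  have Jgx : J (g x) by case: eg => + _ _ _; apply.
  have Jfx : J (f x) by case: ef => + _ _ _; apply.
  apply: (@eqI_trans _ _ (g x * a) _ rI); first exact: Ha.
  apply: (@eqI_trans _ _ (x * b * a) _ rI); first by apply: eqI_mul => //; apply: Hb.
  apply: (@eqI_trans _ _ (f x * b) _ rI); last by apply: eqI_sym => //; apply: Hb.
  rewrite -mulrA (comm b a) mulrA; apply: eqI_sym => //; apply: eqI_mul => //; exact: Ha.
- exists (fun _ => x0); split=> //.
  + move=> y Jy; have [a [i [Ii Hy]]] := comm_gen rI mJ Jx0 nIx0 Jy.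
    exists (fun _ z => z * a); split.
    * move=> _; split.
      -- by move=> x Jx; apply: riM.
      -- by move=> x z _ _; rewrite mulrDl subrr; apply: ri0.
      -- by move=> x r _; rewrite -!mulrA (comm r a) subrr; apply: ri0.
      -- by move=> x Ix; apply: riM.
    * by rewrite big_ord1 Hy addrAC subrr add0r.
  + by move=> fs _ H i; rewrite big_ord1 in H; rewrite (ord1 i).
Qed.

End Comm.

Notation Z := (fun z : R => z = 0).

Lemma idem_of_min : von_neumann_regular R -> forall J, minimal_over Z J ->
  exists e, [/\ e * e = e, e <> 0, J e & forall y, J y -> e * y = y].
Proof.
move=> vN J [rJ _ [x [Jx nx]] minJ].
have [y Hy] := vN x.
have He : x * y * (x * y) = x * y by rewrite mulrA Hy.
have ne : x * y <> 0 by move=> e0; apply: nx; rewrite -Hy e0 mul0r.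
have Je : J (x * y) by apply: riM.
exists (x * y); split=> // z Jz.
pose J' := fun w => exists r, w = x * y * r.
have rJ' : right_ideal J'.
  split; first by exists 0; rewrite mulr0.
  - by move=> _ _ [r1 ->] [r2 ->]; exists (r1 - r2); rewrite mulrBr.
  - by move=> _ r [r1 ->]; exists (r1 * r); rewrite mulrA.
case: (minJ J' rJ').
- by move=> w ->; exists 0; rewrite mulr0.
- by move=> _ [r ->]; apply: riM.
- by move=> H; exfalso; apply: ne; apply: H; exists 1; rewrite mulr1.
- by move=> H; have [r ->] := H z Jz; rewrite mulrA He.
Qed.

Lemma lmul_endo J c : (forall x, J x -> J (c * x)) -> endo Z J (fun z => c * z).
Proof.
move=> Hc; split=> //=.
- by move=> x y _ _; rewrite mulrDr subrr.
- by move=> x r _; rewrite mulrA subrr.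
- by move=> x ->; rewrite mulr0.
Qed.

Section Iii.
Hypothesis H3 : forall J, minimal_over Z J -> End_commutative Z J /\ End_dim Z J 1.

Lemma propa J e : minimal_over Z J -> e * e = e -> J e ->
  forall r1 r2, (e * r1 * e) * (e * r2 * e) = (e * r2 * e) * (e * r1 * e).
Proof.
move=> mJ He Je r1 r2.
have rJ : right_ideal J by case: mJ.
have HJ r : forall x, J x -> J (e * r * e * x).
  by move=> x Jx; rewrite -!mulrA; apply: riM.
have [Hc _] := H3 mJ.
have := Hc _ _ (lmul_endo (HJ r1)) (lmul_endo (HJ r2)) e Je.
by rewrite /= -!(mulrA _ e e) He; apply: subr0_eq.
Qed.

Lemma propb J e : minimal_over Z J -> e * e = e -> e <> 0 -> J e ->
  (forall y, J y -> e * y = y) -> forall r, e * r * e = e * r.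
Proof.
move=> mJ He ne Je eJ r.
have rJ : right_ideal J by case: mJ.
have [_ [xs [Jxs span _]]] := H3 mJ.
set x0 := xs ord0.
have Jx0 : J x0 by apply: Jxs.
have span' : forall y, J y -> exists t, y = e * t * e * x0.
  move=> y Jy; have [fs [Hfs Hy]] := span y Jy.
  move: Hy; rewrite /= big_ord1 => /subr0_eq ->.
  case: (Hfs ord0) => gJ _ glin _.
  have := glin e x0 Je; rewrite /= (eJ _ Jx0) => /subr0_eq ->.
  exists (fs ord0 e); rewrite -(mulrA _ e x0) (eJ _ Jx0).
  by rewrite (eJ _ (gJ _ Je)).
have [t0 Ht0] := span' e Je.
set c := e * t0 * e.
have nc : c <> 0 by move=> c0; apply: ne; rewrite Ht0 -/c c0 mul0r.
have [v Hv] : exists v, e = c * v.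
  pose J' := fun w => exists v, w = c * v.
  have rJ' : right_ideal J'.
    split; first by exists 0; rewrite mulr0.
    - by move=> _ _ [r1 ->] [r2 ->]; exists (r1 - r2); rewrite mulrBr.
    - by move=> _ r' [r1 ->]; exists (r1 * r'); rewrite mulrA.
  case: mJ => _ _ _ minJ.
  case: (minJ J' rJ').
  - by move=> w ->; exists 0; rewrite mulr0.
  - by move=> _ [r' ->]; rewrite /c -!mulrA; apply: riM.
  - by move=> H; exfalso; apply: nc; apply: H; exists 1; rewrite mulr1.
  - by move=> H; apply: H.
set c' := e * v * e.
have cc' : c * c' = e.
  by rewrite /c' !mulrA /c -(mulrA _ e e) He -/c -Hv He.
have c'c : c' * c = e by rewrite /c' /c (propa mJ He Je v t0) -/c -/c' cc'.
have x0c' : x0 = c'.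
  by rewrite -(eJ _ Jx0) -c'c -mulrA -Ht0 /c' -mulrA He.
have [t Ht] := span' (e * r) (riM rJ r Je).
by rewrite Ht x0c' /c' !mulrA -!(mulrA _ e e) !He.
Qed.

Hypothesis vN : von_neumann_regular R.
Hypothesis SA : semiartinian R.

Lemma ess a : a <> 0 -> exists J0, minimal_over Z J0 /\ subsetR J0 (fun y => exists r, y = a * r).
Proof. by case: SA => S [HS allS] na; apply: (stageQ HS) => //. Qed.

Lemma propc J e : minimal_over Z J -> e * e = e -> e <> 0 -> J e ->
  (forall y, J y -> e * y = y) -> forall r, r * e = e * r.
Proof.
move=> mJ He ne Je eJ r.
set t := r * e - e * r * e.
have et : e * t = 0 by rewrite /t mulrBr !mulrA He subrr.
have te : t * e = t by rewrite /t mulrBl -!(mulrA _ e e) !He.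
have t0 : t = 0.
  apply: NNPP => nt.
  have [J0 [mJ0 J0t]] := ess nt.
  have [f [Hf nf J0f fJ0]] := idem_of_min vN mJ0.
  have [s Hs] := J0t f J0f.
  have pb := propb mJ0 Hf nf J0f fJ0.
  have ef : e * f = 0 by rewrite Hs mulrA et mul0r.
  have fe : f * e = 0 by rewrite -pb -mulrA ef mulr0.
  have ft : f * t = 0.
    by rewrite -te mulrA -pb -mulrA fe mulr0.
  by apply: nf; rewrite -Hf {2}Hs mulrA ft mul0r.
have : r * e = e * r * e by apply: subr0_eq.
by rewrite (propb mJ He ne Je eJ).
Qed.

Lemma iii_comm : commutative_ring R.
Proof.
move=> a b; apply: subr0_eq; apply: NNPP => nd.
have [J0 [mJ0 J0d]] := ess nd.
have [e [He ne Je eJ]] := idem_of_min vN mJ0.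
have [w Hw] := J0d e Je.
have Hc := propc mJ0 He ne Je eJ.
have eae u : e * u * e = e * u by rewrite -mulrA Hc mulrA He.
have K u v : (e * u * e) * (e * v * e) = e * (u * v).
  by rewrite !eae mulrA eae -mulrA.
have ed : e * (a * b - b * a) = 0 by rewrite mulrBr -K -K (propa mJ0 He Je a b) subrr.
by apply: ne; rewrite -He {2}Hw mulrA ed mul0r.
Qed.

End Iii.

End Helpers.

Theorem corollary3p6 (R : nzRingType) :
  von_neumann_regular R -> semiartinian R -> primitive_factors_artinian R ->
  (commutative_ring R <->
     (forall I J : R -> Prop, socle_stage I -> minimal_over I J ->
        End_commutative I J /\ End_dim I J 1))
  /\
  ((forall I J : R -> Prop, socle_stage I -> minimal_over I J ->
        End_commutative I J /\ End_dim I J 1) <->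
     (forall J, minimal_over (fun x : R => x = 0) J ->
        End_commutative (fun x : R => x = 0) J /\ End_dim (fun x : R => x = 0) J 1)).
Proof.
move=> vN SA _.
have H1 : commutative_ring R -> forall I J : R -> Prop, socle_stage I -> minimal_over I J ->
        End_commutative I J /\ End_dim I J 1.
  by move=> comm I J HI mJ; apply: comm_ii => //; apply: stage_ri.
have H3 : (forall J, minimal_over (fun x : R => x = 0) J ->
        End_commutative (fun x : R => x = 0) J /\ End_dim (fun x : R => x = 0) J 1) ->
        commutative_ring R.
  by move=> H; apply: iii_comm.
split; split.
- exact: H1.
- by move=> H2; apply: H3 => J mJ; apply: H2 => //; apply: socle_zero.
- by move=> H2 J mJ; apply: H2 => //; apply: socle_zero.
- by move=> H; apply: H1; apply: H3.
Qed.
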